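(* Let $\alpha \in (0,1)$ be an algebraic number with minimal pair $(p(x),q(x))$. If the additive monoid $M_\alpha = \{f(\alpha) \mid f(x) \in \mathbb{N}_0[x,x^{-1}]\}$ satisfies the ACCP, then $p(x) - Q(x)q(x) \notin \mathbb{N}_0[x,x^{-1}]$ for every nonzero Laurent polynomial $Q(x) \in \mathbb{N}_0[x,x^{-1}]$.
   Context: $\mathbb{N}_0[x,x^{-1}]$ denotes the semiring of Laurent polynomials with coefficients in $\mathbb{N}_0$. For a monic polynomial $f(x) \in \mathbb{Q}[x]$, let $\ell$ be the smallest positive integer with $\ell f(x) \in \mathbb{Z}[x]$; the minimal pair of $f$ is the unique pair $(p(x),q(x))$ with $p,q \in \mathbb{N}_0[x]$, $\ell f = p - q$, and $p,q$ having no monomials of the same degree in common. The minimal pair of a real algebraic number is the minimal pair of its minimal polynomial over $\mathbb{Q}$. A monoid $M$ satisfies the ACCP (ascending chain condition on principal ideals) if every ascending chain of principal ideals $x_1 + M \subseteq x_2 + M \subseteq \cdots$ eventually stabilizes. *)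

(* Defs.v *)
From HB Require Import structures.
From mathcomp Require Import all_boot all_order all_algebra.
From mathcomp Require Import reals.
Set Implicit Arguments. Unset Strict Implicit. Unset Printing Implicit Defensive.
Import Order.TTheory GRing.Theory Num.Theory.
Local Open Scope ring_scope.

Definition coefs_nonneg (P : {poly int}) : Prop := forall i : nat, 0 <= P`_i.

(* Laurent polynomials with integer coefficients: the pair (k, P) represents
   x^(-k) * P(x). *)
Definition laurent := (nat * {poly int})%type.

Definition laurent_of_poly (P : {poly int}) : laurent := (0%N, P).

(* x^-k1 P1 - x^-k2 P2 = x^-(k1+k2) (x^k2 P1 - x^k1 P2) *)
Definition laurent_sub (A B : laurent) : laurent :=
  ((fst A + fst B)%N, 'X^(fst B) * snd A - 'X^(fst A) * snd B).

Definition laurent_mul (A B : laurent) : laurent :=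
  ((A.1 + B.1)%N, A.2 * B.2).

(* A Laurent polynomial is zero iff its polynomial part is zero. *)
Definition laurent_nonzero (A : laurent) : Prop := A.2 != 0.

(* Membership in N0[x, x^-1] (independent of the representative). *)
Definition in_N0_laurent (A : laurent) : Prop := coefs_nonneg A.2.

Definition laurent_eval (R : realType) (A : laurent) (a : R) : R :=
  (map_poly intr A.2).[a] / a ^+ A.1.

Definition M_alpha (R : realType) (a : R) : R -> Prop :=
  fun r => exists A : laurent, in_N0_laurent A /\ r = laurent_eval A a.

(* ACCP for an additive submonoid M of R: principal ideals are y + M, and
   x + M ⊆ y + M iff x ∈ y + M. *)
Definition ACCP (R : realType) (M : R -> Prop) : Prop :=
  forall s : nat -> R,
    (forall n, M (s n)) ->
    (forall n, exists m, M m /\ s n = s n.+1 + m) ->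
    exists N : nat, forall n : nat, (N <= n)%N ->
      exists m, M m /\ s n.+1 = s n + m.

Definition is_minpoly_Q (R : realType) (a : R) (f : {poly rat}) : Prop :=
  f \is monic /\ irreducible_poly f /\ root (map_poly ratr f) a.

Definition is_denom (f : {poly rat}) (l : nat) : Prop :=
  (0 < l)%N /\ (exists g : {poly int}, map_poly intr g = l%:R *: f) /\
  (forall l' : nat, (0 < l')%N ->
     (exists g : {poly int}, map_poly intr g = l'%:R *: f) -> (l <= l')%N).

Definition is_minimal_pair (f : {poly rat}) (p q : {poly int}) : Prop :=
  exists l : nat, is_denom f l /\
    map_poly intr (p - q) = l%:R *: f /\
    coefs_nonneg p /\ coefs_nonneg q /\
    (forall i : nat, p`_i = 0 \/ q`_i = 0).

(* Main.v *)
Require Import Defs.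
From HB Require Import structures.
From mathcomp Require Import all_boot all_order all_algebra.
From mathcomp Require Import reals.
From mathcomp Require Import ring.
Import Order.TTheory GRing.Theory Num.Theory.
Local Open Scope ring_scope.

Section H.
Variable R : realType.

Lemma ev_sum (P : {poly int}) (a : R) :
  (map_poly intr P).[a] = \sum_(i < size P) (P`_i)%:~R * a ^+ i.
Proof.
rewrite horner_coef size_map_inj_poly //; last exact: intr_inj.
by apply: eq_bigr => i _; rewrite coef_map.
Qed.

Lemma ev_ge0 (P : {poly int}) (a : R) : coefs_nonneg P -> 0 < a ->
  0 <= (map_poly intr P).[a].
Proof.
move=> hP ha; rewrite ev_sum; apply: sumr_ge0 => i _.
by apply: mulr_ge0; [rewrite ler0z; exact: hP | exact/exprn_ge0/ltW].
Qed.

Lemma ev_eq0 (P : {poly int}) (a : R) : coefs_nonneg P -> 0 < a ->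
  (map_poly intr P).[a] = 0 -> P = 0.
Proof.
move=> hP ha; rewrite ev_sum => /psumr_eq0P H.
have {}H : forall i : 'I_(size P), true -> (P`_i)%:~R * a ^+ i = 0 :> R.
  by apply: H => i _; apply: mulr_ge0; [rewrite ler0z; exact: hP | exact/exprn_ge0/ltW].
apply/eqP; apply: contraT => hn.
have hlt : ((size P).-1 < size P)%N by rewrite ltn_predL size_poly_gt0.
have := H (Ordinal hlt) isT => /eqP.
rewrite mulf_eq0 expf_eq0 (gt_eqF ha) andbF orbF intr_eq0 /= => h.
by move: hn; rewrite -lead_coef_eq0 lead_coefE h.
Qed.

Lemma ev_gt0 (P : {poly int}) (a : R) : coefs_nonneg P -> 0 < a -> P != 0 ->
  0 < (map_poly intr P).[a].
Proof.
move=> hP ha hn; rewrite lt_def ev_ge0 // andbT; apply/eqP => /ev_eq0 h.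
by move/eqP: hn; apply; apply: h.
Qed.

Lemma cn_mul (P Q : {poly int}) : coefs_nonneg P -> coefs_nonneg Q -> coefs_nonneg (P * Q).
Proof.
move=> hP hQ i; rewrite coefM; apply: sumr_ge0 => j _; exact: mulr_ge0.
Qed.

Lemma M_ge0 (a : R) m : 0 < a -> M_alpha a m -> 0 <= m.
Proof.
move=> ha [[k P] [hP ->]]; rewrite /laurent_eval /=.
by rewrite divr_ge0 ?ev_ge0 // exprn_ge0 // ltW.
Qed.

Lemma M_mul (a : R) x y : 0 < a -> M_alpha a x -> M_alpha a y -> M_alpha a (x * y).
Proof.
move=> ha [A [hA ->]] [B [hB ->]]; exists (laurent_mul A B); split.
  exact: cn_mul.
rewrite /laurent_eval /laurent_mul /= rmorphM hornerM exprD.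
rewrite invfM; set u := _.[a]; set v := _.[a]. rewrite -!mulrA; congr (_ * _).
by rewrite mulrC -!mulrA; congr (_ * _); rewrite mulrC.
Qed.

Lemma M_1 (a : R) : M_alpha a 1.
Proof.
exists (0%N, 1); split; first by move=> i; rewrite coef1; case: (i == 0)%N.
by rewrite /laurent_eval /= rmorph1 hornerC expr0 divr1.
Qed.

Lemma M_exp (a : R) x n : 0 < a -> M_alpha a x -> M_alpha a (x ^+ n).
Proof.
move=> ha hx; elim: n => [|n IH]; first by rewrite expr0; exact: M_1.
by rewrite exprS; apply: M_mul.
Qed.

Lemma no_accp (a : R) c u v : 0 < a -> M_alpha a c -> M_alpha a u -> M_alpha a v ->
  0 < u -> 0 < v -> c = u * c + v -> ~ ACCP (M_alpha a).
Proof.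
move=> ha hc hu hv u0 v0 e acc.
have step : forall n, c * u ^+ n = c * u ^+ n.+1 + u ^+ n * v.
  by move=> n; rewrite {1}e exprS mulrDl mulrA (mulrC c u) -!mulrA (mulrC v).
have [N HN] := acc (fun n => c * u ^+ n)
  (fun n => M_mul _ _ _ ha hc (M_exp _ _ n ha hu))
  (fun n => ex_intro _ (u ^+ n * v) (conj (M_mul _ _ _ ha (M_exp _ _ n ha hu) hv) (step n))).
have [m [hm e2]] := HN N (leqnn N).
have m0 := M_ge0 _ _ ha hm.
have p0 : 0 < u ^+ N * v by rewrite mulr_gt0 // exprn_gt0.
have := step N; rewrite e2 -addrA -{1}(addr0 (c * u ^+ N)) => /addrI /eqP.
by rewrite eq_sym gt_eqF // ltr_wpDl.
Qed.

Lemma M_ev (a : R) (A : laurent) : in_N0_laurent A -> M_alpha a (laurent_eval A a).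
Proof. by move=> h; exists A. Qed.

Lemma E_rat (g : {poly int}) (a : R) :
  (map_poly intr g).[a] = (map_poly ratr (map_poly (intr : int -> rat) g)).[a].
Proof.
rewrite -map_poly_comp; congr (_.[a]); apply: eq_map_poly => x /=.
by rewrite ratr_int.
Qed.
End H.

Theorem proposition4p1 (R : realType) (a : R) (f : {poly rat}) (p q : {poly int}) :
  0 < a -> a < 1 ->
  is_minpoly_Q a f ->
  is_minimal_pair f p q ->
  ACCP (M_alpha a) ->
  forall Q : laurent, in_N0_laurent Q -> laurent_nonzero Q ->
    ~ in_N0_laurent (laurent_sub (laurent_of_poly p)
                                 (laurent_mul Q (laurent_of_poly q))).
Proof.
move=> a0 a1 [fmon [_ froot]] [l [[l0 _] [hmap [cp [cq _]]]]] acc [k P] hP hPn hL.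
rewrite /laurent_nonzero /= in hPn.
rewrite /in_N0_laurent /= in hP.
set E := fun g : {poly int} => (map_poly (intr : int -> R) g).[a].
have pq0 : p - q != 0.
  apply/eqP => e; move: hmap; rewrite e rmorph0 => /esym /eqP.
  rewrite scaler_eq0 pnatr_eq0 (negbTE (lt0n_neq0 l0)) /= => /eqP f0.
  by move: fmon; rewrite f0 monicE lead_coef0 eq_sym oner_eq0.
have Epq : E p = E q.
  apply/eqP; rewrite -subr_eq0; apply/eqP.
  rewrite /E -hornerN -hornerD -rmorphB E_rat hmap map_polyZ hornerZ.
  by move/eqP: froot => ->; rewrite mulr0.
have ak0 : 0 < a ^+ k by rewrite exprn_gt0.
have c0 : 0 < E q.
  rewrite lt_def ev_ge0 // andbT; apply/eqP => e.
  have q0 := ev_eq0 _ _ _ cq a0 e.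
  have p0 : p = 0 by apply: (ev_eq0 _ _ _ cp a0); rewrite -/(E p) Epq.
  by move: pq0; rewrite p0 q0 subrr eqxx.
set T := E P / a ^+ k.
have T0 : 0 < T by rewrite divr_gt0 // ev_gt0.
set L := laurent_sub _ _ in hL.
have EL : laurent_eval L a = E p - T * E q.
  rewrite /laurent_eval /L /= add0n addn0 expr0 mul1r rmorphB !rmorphM /= map_polyXn.
  rewrite hornerD hornerN !hornerM hornerXn -/(E p) -/(E q) -/(E P) /T.
  field; exact: lt0r_neq0.
have Rv0 := M_ge0 _ _ _ a0 (M_ev _ a _ hL).
have MT : M_alpha a T by apply: (M_ev _ a (k, P)).
have Mc : M_alpha a (E q) by have := M_ev _ a (0%N, q) cq; rewrite /laurent_eval /= expr0 divr1.
have MR : M_alpha a (laurent_eval L a) := M_ev _ a _ hL.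
have ecq : E q = T * E q + laurent_eval L a by rewrite EL Epq; ring.
have [Rpos|Rle] := ltrP 0 (laurent_eval L a).
  exact: (no_accp _ _ _ _ _ a0 Mc MT MR T0 Rpos ecq).
have R0 : laurent_eval L a = 0 by apply/le_anti; rewrite Rle Rv0.
have T1 : T = 1.
  by apply: (mulIf (lt0r_neq0 c0)); rewrite mul1r {2}ecq R0 addr0.
set j := (size P).-1.
have Pj : 0 < P`_j.
  by rewrite lt_def hP andbT; move: hPn; rewrite -lead_coef_eq0 lead_coefE.
have cw : coefs_nonneg (P - 'X^j).
  move=> i; rewrite coefB coefXn; case: eqP => [->|_]; last by rewrite subr0.
  by rewrite /= subr_ge0 -gtz0_ge1.
set u := a ^+ j / a ^+ k.
have Mu : M_alpha a u.
  have := M_ev _ a (k, 'X^j); rewrite /laurent_eval /= map_polyXn hornerXn; apply.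
  by move=> i; rewrite /= coefXn ler0n.
set w := laurent_eval (k, P - 'X^j) a.
have ew : w = T - u.
  by rewrite /w /laurent_eval /= rmorphB /= map_polyXn hornerD hornerN hornerXn /T /u mulrBl.
have Mw : M_alpha a w := M_ev _ a (k, P - 'X^j) cw.
case: (ltrP 0 w) => [wpos|wle].
  apply: (no_accp _ _ (E q) u (w * E q) a0 Mc Mu (M_mul _ _ _ _ a0 Mw Mc) _ (mulr_gt0 wpos c0) _ acc).
    by rewrite divr_gt0 // exprn_gt0.
  by rewrite -mulrDl addrC ew subrK T1 mul1r.
have w0 : w = 0 by apply/le_anti; rewrite wle (M_ge0 _ _ _ a0 Mw).
have Pj' : P = 'X^j.
  apply/eqP; rewrite -subr_eq0; apply/eqP; apply: (ev_eq0 _ _ _ cw a0).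
  move: w0; rewrite /w /laurent_eval /= => /eqP.
  by rewrite mulf_eq0 invr_eq0 (gt_eqF ak0) orbF => /eqP.
have ejk : j = k.
  apply: (ieexprIn a0 (negbT (lt_eqF a1))).
  move: T1; rewrite /T Pj' /E map_polyXn hornerXn.
  move/(congr1 (fun x => x * a ^+ k)); rewrite divfK ?mul1r //; exact: lt0r_neq0.
have L20 : L.2 = 0.
  apply: (ev_eq0 _ _ _ hL a0); move: R0; rewrite /laurent_eval => /eqP.
  by rewrite mulf_eq0 invr_eq0 (gt_eqF (exprn_gt0 _ a0)) orbF => /eqP.
move: L20; rewrite /L /= Pj' ejk addn0 expr0 mul1r -mulrBr => /eqP.
rewrite mulf_eq0 (negbTE pq0) orbF.
by rewrite expf_eq0 polyX_eq0 andbF.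
Qed.
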